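(* Let $E$ be a finite nonempty set and $X\in\mathcal{X}(2)\setminus\mathcal{X}^*(2)$. Then there exist a function $f:2^E\to\mathbb{N}$ with $X=\mathbb{B}_f(2)$, regular functions $C_e:\mathbb{N}\times\mathbb{N}\to\mathbb{R}_+$, $e\in E$, a vector $\vec t\in\mathbb{N}^E$ and integers $d,d'\in\mathbb{N}$ with $|d-d'|=1$ and $\mathbb{B}_f(d),\mathbb{B}_f(d')\neq\emptyset$, such that, writing $Q(\vec t,k)$ for the problem of minimizing $\sum_{e\in E}C_e(x_e;t_e)$ subject to $\vec x\in\mathbb{B}_f(k)$, there is an optimal solution $\vec x^*$ of $Q(\vec t,d)$ with $\|\vec x^*-\vec x'\|>1$ for every optimal solution $\vec x'$ of $Q(\vec t,d')$.
   Context: $\mathbb{N}=\{0,1,2,\dots\}$; $\|\cdot\|$ is the $L_1$-norm; $x(U)=\sum_{e\in U}x_e$. For $f:2^E\to\mathbb{N}$, $\mathbb{B}_f(d)=\{\vec x\in\mathbb{N}^E: x(U)\le f(U)\ \forall U\subseteq E,\ x(E)=d\}$. $f$ is strictly positive if $f(U)>0$ for all nonempty $U$, normalized if $f(\emptyset)=0$, monotonic if $f(U)\le f(V)$ for $U\subseteq V$. $\mathcal{X}(d)=\{\mathbb{B}_f(d): f \text{ strictly positive, normalized, monotonic}\}$, $\mathcal{X}^*(d)=\{\mathbb{B}_f(d): f\text{ strictly positive, normalized, monotonic, submodular}\}$. For $C:\mathbb{N}\times\mathbb{N}\to\mathbb{R}$, $C^-(x;t)=C(x;t)-C(x-1;t)$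 for $x\ge1$; $C$ is regular if $C^-(x;t)\le C^-(x;t+1)$ and $C^-(x;t+1)\le C^-(x+1;t)$ for all $x\ge1,t\in\mathbb{N}$. *)

(* Defs.v *)
From HB Require Import structures.
From mathcomp Require Import all_boot all_order all_algebra.
From mathcomp Require Import Rstruct.
Set Implicit Arguments. Unset Strict Implicit. Unset Printing Implicit Defensive.
Import Order.TTheory GRing.Theory Num.Theory.

(* vectors in N^E are functions E -> nat; x(U) = sum over U *)
Definition xsum (E : finType) (x : E -> nat) (U : {set E}) : nat :=
  (\sum_(e in U) x e)%N.

Definition inB (E : finType) (f : {set E} -> nat) (d : nat) (x : E -> nat) : Prop :=
  (forall U : {set E}, xsum x U <= f U)%N /\ xsum x [set: E] = d.

Definition strictly_positive (E : finType) (f : {set E} -> nat) : Prop :=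
  forall U : {set E}, U != set0 -> (0 < f U)%N.
Definition normalized (E : finType) (f : {set E} -> nat) : Prop := f set0 = 0%N.
Definition monotonic (E : finType) (f : {set E} -> nat) : Prop :=
  forall U V : {set E}, U \subset V -> (f U <= f V)%N.
Definition submodular (E : finType) (f : {set E} -> nat) : Prop :=
  forall U V : {set E}, (f (U :|: V) + f (U :&: V) <= f U + f V)%N.

Definition is_B (E : finType) (X : (E -> nat) -> Prop) (f : {set E} -> nat) (d : nat) :=
  forall x, X x <-> inB f d x.

Definition in_calX (E : finType) (d : nat) (X : (E -> nat) -> Prop) : Prop :=
  exists f, [/\ strictly_positive f, normalized f, monotonic f & is_B X f d].
Definition in_calX_star (E : finType) (d : nat) (X : (E -> nat) -> Prop) : Prop :=
  exists f, [/\ strictly_positive f, normalized f, monotonic f, submodular f & is_B X f d].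

Definition l1dist (E : finType) (x y : E -> nat) : nat :=
  (\sum_(e : E) ((x e - y e) + (y e - x e)))%nat.

Local Open Scope ring_scope.

Definition Cminus (C : nat -> nat -> Rdefinitions.R) (x t : nat) : Rdefinitions.R := C x t - C x.-1 t.

Definition regular (C : nat -> nat -> Rdefinitions.R) : Prop :=
  forall x t : nat, leq 1 x ->
    Cminus C x t <= Cminus C x t.+1 /\ Cminus C x t.+1 <= Cminus C x.+1 t.

Definition cost (E : finType) (C : E -> nat -> nat -> Rdefinitions.R) (t x : E -> nat) : Rdefinitions.R :=
  \sum_(e : E) C e (x e) (t e).

Definition optimal (E : finType) (C : E -> nat -> nat -> Rdefinitions.R) (f : {set E} -> nat)
  (t : E -> nat) (k : nat) (x : E -> nat) : Prop :=
  inB f k x /\ forall y, inB f k y -> cost C t x <= cost C t y.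

(* Main.v *)
Require Import Defs.
From HB Require Import structures.
From mathcomp Require Import all_boot all_order all_algebra.
From mathcomp Require Import Rstruct.
Import Order.TTheory GRing.Theory Num.Theory.
Set Implicit Arguments. Unset Strict Implicit.
Local Open Scope nat_scope.

Definition supp (E : finType) (x : E -> nat) : {set E} := [set e | 0 < x e].
Arguments supp {E}.

Lemma xsum_sub (E : finType) (x : E -> nat) (U V : {set E}) :
  U \subset V -> xsum x U <= xsum x V.
Proof.
move=> sUV; rewrite /xsum [X in _ <= X](big_setID U) /= (setIidPr sUV).
exact: leq_addr.
Qed.

Lemma xsum_out (E : finType) (x : E -> nat) (U : {set E}) e :
  e \notin U -> xsum x U + x e <= xsum x setT.
Proof.
move=> eU; rewrite addnC -(big_setU1 _ eU) /=; apply: xsum_sub; exact: subsetT.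
Qed.

Lemma xsum_supp (E : finType) (x : E -> nat) : xsum x (supp x) = xsum x setT.
Proof.
rewrite /xsum [RHS](big_setID (supp x)) /= setTI.
rewrite [X in _ = _ + X]big1 ?addn0 // => e; rewrite !inE /= -leqNgt leqn0.
by rewrite andbT => /eqP.
Qed.

Lemma card_supp (E : finType) (x : E -> nat) : #|supp x| <= xsum x (supp x).
Proof.
rewrite -sum1_card /xsum; apply: leq_sum => e; by rewrite inE.
Qed.

From mathcomp Require Import zify.

Lemma inB2_char (E : finType) (g : {set E} -> nat) (x : E -> nat) :
  strictly_positive g -> monotonic g ->
  inB g 2 x <-> xsum x setT = 2 /\ 2 <= g (supp x).
Proof.
move=> gpos gmon; split.
- case=> Hle Hs; split=> //; rewrite -Hs -xsum_supp; exact: Hle.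
- case=> Hs Hg; split=> // U.
  case: (boolP (supp x \subset U)) => sub.
  + apply: leq_trans (gmon _ _ sub); apply: leq_trans Hg.
    rewrite -Hs; apply: xsum_sub; exact: subsetT.
  + case/subsetPn: sub => e eS eU.
    have := @xsum_out _ x U e eU; rewrite Hs.
    have xe : 0 < x e by rewrite inE in eS.
    have [->|nz] := eqVneq U set0; first by rewrite /xsum big_set0.
    have := gpos U nz; lia.
Qed.

Lemma F_le1 (E : finType) (F : E -> nat) e : F e <= \sum_i F i.
Proof. by rewrite (bigD1 e) //= leq_addr. Qed.

Lemma F_le2 (E : finType) (F : E -> nat) e e' : e != e' ->
  F e + F e' <= \sum_i F i.
Proof.
move=> ne; rewrite (bigD1 e) //= (bigD1 e') /=; last by rewrite eq_sym.
by rewrite addnA leq_addr.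
Qed.

Definition Pq (E : finType) (f0 : {set E} -> nat) (U : {set E}) : bool :=
  [exists u in U, exists v in U, 2 <= f0 [set u; v]].

Definition fq (E : finType) (f0 : {set E} -> nat) (U : {set E}) : nat :=
  if U == set0 then 0 else if Pq f0 U then 2 else 1.

Lemma Pq_intro (E : finType) (f0 : {set E} -> nat) (U : {set E}) u v :
  u \in U -> v \in U -> 2 <= f0 [set u; v] -> Pq f0 U.
Proof.
move=> uU vU q; apply/existsP; exists u; rewrite uU /=.
by apply/existsP; exists v; rewrite vU.
Qed.

Lemma Pq_elim (E : finType) (f0 : {set E} -> nat) (U : {set E}) :
  Pq f0 U -> exists u v, [/\ u \in U, v \in U & 2 <= f0 [set u; v]].
Proof.
by case/existsP=> u /andP[uU /existsP[v /andP[vU q]]]; exists u, v.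
Qed.

Lemma Pq_mon (E : finType) (f0 : {set E} -> nat) (U V : {set E}) :
  U \subset V -> Pq f0 U -> Pq f0 V.
Proof.
move=> sUV /Pq_elim[u [v [uU vU q]]].
apply: Pq_intro q; exact: (subsetP sUV).
Qed.

Lemma q_sym (E : finType) (f0 : {set E} -> nat) (u v : E) :
  f0 [set u; v] = f0 [set v; u].
Proof. by rewrite setUC. Qed.

Lemma fq0 (E : finType) (f0 : {set E} -> nat) : fq f0 set0 = 0.
Proof. by rewrite /fq eqxx. Qed.

Lemma fq_le2 (E : finType) (f0 : {set E} -> nat) (U : {set E}) : fq f0 U <= 2.
Proof. by rewrite /fq; case: ifP => //; case: ifP. Qed.

Lemma fq_ge1 (E : finType) (f0 : {set E} -> nat) (U : {set E}) : U != set0 -> 1 <= fq f0 U.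
Proof. by move=> nz; rewrite /fq (negPf nz); case: ifP. Qed.

Lemma fqP (E : finType) (f0 : {set E} -> nat) (U : {set E}) : U != set0 -> Pq f0 U -> fq f0 U = 2.
Proof. by move=> nz P; rewrite /fq (negPf nz) P. Qed.

Lemma fqnP (E : finType) (f0 : {set E} -> nat) (U : {set E}) : U != set0 -> ~~ Pq f0 U -> fq f0 U = 1.
Proof. by move=> nz P; rewrite /fq (negPf nz) (negPf P). Qed.

Lemma fq_sp (E : finType) (f0 : {set E} -> nat) : strictly_positive (fq f0).
Proof. by move=> U nz; rewrite fq_ge1. Qed.

Lemma fq_mon (E : finType) (f0 : {set E} -> nat) : monotonic (fq f0).
Proof.
move=> U V sUV.
have [->|nzU] := eqVneq U set0; first by rewrite fq0.
have nzV : V != set0.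
  by apply: contraNneq nzU => V0; rewrite -subset0 -V0.
case: (boolP (Pq f0 U)) => pU.
  by rewrite (fqP nzU pU) (fqP nzV (Pq_mon sUV pU)).
by rewrite (fqnP nzU pU) fq_ge1.
Qed.

Section Key.
End Key.

Lemma key_cross (E : finType) (f0 : {set E} -> nat) (U V : {set E}) w u v :
  (forall b c d, b != c -> b != d -> 2 <= f0 [set c; d] ->
     (2 <= f0 [set b; c]) || (2 <= f0 [set b; d])) ->
  ~~ Pq f0 U -> ~~ Pq f0 V -> w \in U -> w \in V ->
  u \in U -> v \in V -> 2 <= f0 [set u; v] -> False.
Proof.
move=> nowit nU nV wU wV uU vV q.
have [wu|wu] := eqVneq w u.
  by subst w; move/negP: nV; apply; exact: Pq_intro wV vV q.
have [wv|wv] := eqVneq w v.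
  by subst w; move/negP: nU; apply; exact: Pq_intro uU wU q.
case/orP: (nowit w u v wu wv q) => h.
  by move/negP: nU; apply; exact: Pq_intro wU uU h.
by move/negP: nV; apply; exact: Pq_intro wV vV h.
Qed.

Lemma key (E : finType) (f0 : {set E} -> nat) (U V : {set E}) w :
  (forall b c d, b != c -> b != d -> 2 <= f0 [set c; d] ->
     (2 <= f0 [set b; c]) || (2 <= f0 [set b; d])) ->
  ~~ Pq f0 U -> ~~ Pq f0 V -> w \in U -> w \in V -> ~~ Pq f0 (U :|: V).
Proof.
move=> nowit nU nV wU wV; apply/negP => /Pq_elim[u [v [uUV vUV q]]].
rewrite !inE in uUV vUV.
case/orP: uUV => uU; case/orP: vUV => vV.
- by move/negP: nU; apply; exact: Pq_intro uU vV q.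
- exact: (key_cross nowit nU nV wU wV uU vV q).
- by rewrite q_sym in q; exact: (key_cross nowit nU nV wU wV vV uU q).
- by move/negP: nV; apply; exact: Pq_intro uU vV q.
Qed.

Lemma fq_sub (E : finType) (f0 : {set E} -> nat) :
  (forall b c d, b != c -> b != d -> 2 <= f0 [set c; d] ->
     (2 <= f0 [set b; c]) || (2 <= f0 [set b; d])) ->
  submodular (fq f0).
Proof.
move=> nowit U V.
have [I0|nI] := eqVneq (U :&: V) set0.
  rewrite I0 fq0 addn0.
  have [->|nU] := eqVneq U set0; first by rewrite set0U fq0.
  have [->|nV] := eqVneq V set0; first by rewrite setU0 fq0 addn0.
  have := fq_ge1 f0 nU; have := fq_ge1 f0 nV; have := fq_le2 f0 (U :|: V); lia.
case/set0Pn: (nI) => w; rewrite inE => /andP[wU wV].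
have nU : U != set0 by apply/set0Pn; exists w.
have nV : V != set0 by apply/set0Pn; exists w.
have nUV : U :|: V != set0 by apply/set0Pn; exists w; rewrite inE wU.
case: (boolP (Pq f0 (U :&: V))) => pI.
  rewrite (fqP nU (Pq_mon (subsetIl U V) pI)) (fqP nV (Pq_mon (subsetIr U V) pI)).
  have := fq_le2 f0 (U :|: V); have := fq_le2 f0 (U :&: V); lia.
rewrite (fqnP nI pI).
case: (boolP (Pq f0 U)) => pU.
  rewrite (fqP nU pU); have := fq_ge1 f0 nV; have := fq_le2 f0 (U :|: V); lia.
case: (boolP (Pq f0 V)) => pV.
  rewrite (fqP nV pV); have := fq_ge1 f0 nU; have := fq_le2 f0 (U :|: V); lia.
by rewrite (fqnP nUV (key nowit pU pV wU wV)) (fqnP nU pU) (fqnP nV pV).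
Qed.

Lemma supp_pair (E : finType) (x : E -> nat) :
  xsum x setT = 2 -> exists u v, supp x = [set u; v].
Proof.
move=> Hs.
have c2 : #|supp x| <= 2 by rewrite -Hs -xsum_supp card_supp.
have c0 : 0 < #|supp x|.
  rewrite card_gt0; apply/negP => /eqP S0.
  by move: Hs; rewrite -xsum_supp S0 /xsum big_set0.
case: (boolP (#|supp x| == 1)) => c1.
  by move/cards1P: c1 => -[u ->]; exists u, u; rewrite setUid.
have : #|supp x| == 2 by lia.
by move/cards2P => -[u [v [_ ->]]]; exists u, v.
Qed.

Lemma fq_isB (E : finType) (X : (E -> nat) -> Prop) (f0 : {set E} -> nat) :
  strictly_positive f0 -> monotonic f0 -> is_B X f0 2 -> is_B X (fq f0) 2.
Proof.
move=> pos mon HB x; rewrite HB.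
rewrite (inB2_char _ pos mon) (inB2_char _ (@fq_sp _ f0) (@fq_mon _ f0)).
split=> -[Hs H]; split=> //; have [u [v Suv]] := supp_pair Hs.
- have nz : supp x != set0 by apply/set0Pn; exists u; rewrite Suv !inE eqxx.
  rewrite fqP //; apply: (Pq_intro (u:=u) (v:=v)); rewrite ?Suv ?inE ?eqxx ?orbT //.
  by rewrite -Suv.
- have nz : supp x != set0 by apply/set0Pn; exists u; rewrite Suv !inE eqxx.
  case: (boolP (Pq f0 (supp x))) => P; last by rewrite fqnP in H.
  case/Pq_elim: P => a [b [aS bS q]]; apply: leq_trans q _; apply: mon.
  by apply/subsetP => e /set2P[] ->.
Qed.

Definition wt (E : finType) (b c d : E) (e : E) : nat :=
  if e == b then 0 else if (e == c) || (e == d) then 1 else 2.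
Definition Cn (E : finType) (b c d : E) (e : E) (y : nat) : nat :=
  wt b c d e * y + 2 * (y - 1).

Lemma Cn_conv (E : finType) (b c d e : E) y : 1 <= y ->
  Cn b c d e y + Cn b c d e y <= Cn b c d e y.+1 + Cn b c d e y.-1.
Proof.
rewrite /Cn; case: y => [|y] //= _; rewrite !mulnS.
set W := wt b c d e; lia.
Qed.

Lemma sum_eq1 (E : finType) (c : E) : \sum_(e in [set: E]) ((e == c) : nat) = 1.
Proof.
rewrite (bigD1 c) ?inE //= eqxx big1 // => e /andP[_ /negPf ->] //.
Qed.

Lemma xs_inB (E : finType) (f0 : {set E} -> nat) (c d : E) :
  strictly_positive f0 -> monotonic f0 -> c != d -> 2 <= f0 [set c; d] ->
  inB f0 2 (fun e => (e == c) + (e == d)).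
Proof.
move=> pos mon cd q; apply/(inB2_char _ pos mon); split.
  by rewrite /xsum big_split /= !sum_eq1.
have -> : supp (fun e => (e == c) + (e == d)) = [set c; d].
  by apply/setP => e; rewrite !inE; case: (e == c); case: (e == d).
exact: q.
Qed.

Lemma chi_inB (E : finType) (f0 : {set E} -> nat) (b : E) :
  strictly_positive f0 -> inB f0 1 (fun e => (e == b) : nat).
Proof.
move=> pos; split; last exact: sum_eq1.
move=> U; case: (boolP (b \in U)) => bU.
  rewrite /xsum (bigD1 b) //= eqxx big1 => [|e /andP[_ /negPf ->]] //.
  by rewrite addn0; apply: pos; apply/set0Pn; exists b.
rewrite /xsum big1 // => e eU; apply/eqP; rewrite eqb0; apply/eqP => eb.
by subst e; rewrite eU in bU.
Qed.

Lemma cost_xs (E : finType) (b c d : E) : b != c -> b != d -> c != d ->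
  \sum_e Cn b c d e ((e == c) + (e == d)) = 2.
Proof.
move=> bc bd cd.
transitivity (\sum_(e in [set: E]) ((e == c) + (e == d))).
  apply: eq_big => [e|e _]; first by rewrite inE.
  rewrite /Cn /wt; have [->|eb] := eqVneq e b.
    by rewrite (negPf bc) (negPf bd).
  have [->|ec] := eqVneq e c; first by rewrite (negPf cd).
  by case: (e == d).
by rewrite big_split /= !sum_eq1.
Qed.

Lemma cost_lb (E : finType) (f0 : {set E} -> nat) (b c d : E) (y : E -> nat) :
  strictly_positive f0 -> monotonic f0 -> b != c -> b != d -> c != d ->
  ~~ (2 <= f0 [set b; c]) -> ~~ (2 <= f0 [set b; d]) ->
  inB f0 2 y -> 2 <= \sum_e Cn b c d e (y e).
Proof.
move=> pos mon bc bd cd nbc nbd /(inB2_char _ pos mon) [Hs Hg].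
have nsub : forall a, ~~ (2 <= f0 [set b; a]) ->
    exists2 e, e \in supp y & e \notin [set b; a].
  move=> a na; apply/subsetPn; apply/negP => sub.
  by move/negP: na; apply; exact: leq_trans Hg (mon _ _ sub).
have [e eS eN] := nsub c nbc.
rewrite !inE negb_or in eN; case/andP: eN => eb ec.
have ye : 0 < y e by rewrite inE in eS.
have [ed|ed] := eqVneq e d; last first.
  apply: leq_trans (F_le1 (fun i => Cn b c d i (y i)) e).
  rewrite /Cn /wt (negPf eb) (negPf ec) (negPf ed) /=; lia.
subst e.
have [e' e'S e'N] := nsub d nbd.
rewrite !inE negb_or in e'N; case/andP: e'N => e'b e'd.
have ye' : 0 < y e' by rewrite inE in e'S.
have [e'c|e'c] := eqVneq e' c; last first.
  apply: leq_trans (F_le1 (fun i => Cn b c d i (y i)) e').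
  rewrite /Cn /wt (negPf e'b) (negPf e'c) (negPf e'd) /=; lia.
subst e'.
apply: leq_trans (F_le2 (fun i => Cn b c d i (y i)) cd).
rewrite /Cn /wt (negPf e'b) (negPf eb) !eqxx /= orbT; lia.
Qed.

Lemma chi_cost (E : finType) (b c d : E) :
  \sum_e Cn b c d e ((e == b) : nat) = 0.
Proof.
apply: big1 => e _; rewrite /Cn /wt; case: (e == b) => //=.
by rewrite muln0.
Qed.

Lemma l1_lb (E : finType) (b c d : E) (x' : E -> nat) : b != c -> b != d -> c != d ->
  \sum_e Cn b c d e (x' e) = 0 ->
  1 < l1dist (fun e => (e == c) + (e == d)) x'.
Proof.
move=> bc bd cd Hz.
have cb : c != b by rewrite eq_sym.
have db : d != b by rewrite eq_sym.
have Hc : x' c = 0.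
  have := F_le1 (fun i => Cn b c d i (x' i)) c; rewrite Hz leqn0 /Cn /wt.
  rewrite (negPf cb) eqxx /= => /eqP; lia.
have Hd : x' d = 0.
  have := F_le1 (fun i => Cn b c d i (x' i)) d; rewrite Hz leqn0 /Cn /wt.
  rewrite (negPf db) eqxx orbT /= => /eqP; lia.
apply: leq_trans (F_le2 (fun e => ((e == c) + (e == d) - x' e) + (x' e - ((e == c) + (e == d)))) cd).
rewrite /= Hc Hd !eqxx (negPf cd) eq_sym (negPf cd) /=; done.
Qed.

Unset Implicit Arguments. Set Strict Implicit.
From mathcomp Require Import lra.
From Stdlib Require Classical_Prop.
Local Open Scope ring_scope.

Theorem theorem6p5 (E : finType) (X : (E -> nat) -> Prop) :
  (0 < #|E|)%N ->
  in_calX 2 X -> ~ in_calX_star 2 X ->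
  exists (f : {set E} -> nat) (C : E -> nat -> nat -> Rdefinitions.R) (t : E -> nat) (d d' : nat),
    [/\ is_B X f 2,
        forall e, regular (C e) /\ (forall x s, 0 <= C e x s),
        (d' = d.+1 \/ d = d'.+1),
        (exists x, inB f d x) /\ (exists x, inB f d' x) &
        exists xs, optimal C f t d xs /\
          forall x', optimal C f t d' x' -> (1 < l1dist xs x')%N].
Proof.
move=> _ [f0 [pos norm mon HB]] nstar.
case: (Classical_Prop.classic (exists b c d : E, [/\ b != c, b != d,
   (2 <= f0 [set c; d])%N & ((2 <= f0 [set b; c]) || (2 <= f0 [set b; d]))%N = false]))
  => [[b [c [d [bc bd qcd nq]]]]|nowit]; last first.
  exfalso; apply: nstar; exists (fq f0); split.
  - exact: fq_sp.
  - exact: fq0.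
  - exact: fq_mon.
  - apply: fq_sub => b c d bc bd q; case H: (_ || _) => //; exfalso; apply: nowit.
    by exists b, c, d.
  - exact: fq_isB.
move/norP: nq => [nbc nbd].
have cd : c != d.
  apply: contraNneq nbc => cd; subst d; apply: leq_trans qcd _; apply: mon.
  by apply/subsetP => e /set2P[] ->; rewrite !inE eqxx ?orbT.
pose C := fun (e : E) (y s : nat) => ((Cn b c d e y)%:R : Rdefinitions.R).
have costE : forall t x, cost C t x = (\sum_e Cn b c d e (x e))%:R.
  by move=> t x; rewrite /cost natr_sum.
pose xs := fun e : E => ((e == c) + (e == d))%N.
pose chi := fun e : E => nat_of_bool (e == b).
exists f0, C, (fun _ => 0%N), 2%N, 1%N; split.
- exact: HB.
- move=> e; split => [y s y1|y s]; last exact: ler0n.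
  rewrite /Cminus /C; split; first exact: lexx.
  have := Cn_conv b c d e y1; rewrite -(ler_nat Rdefinitions.R) !natrD => h; lra.
- by right.
- split; [exists xs; exact: xs_inB | exists chi; exact: chi_inB].
- exists xs; split.
    split; first exact: xs_inB.
    move=> y yB; rewrite !costE ler_nat /xs cost_xs //.
    exact: cost_lb yB.
  move=> x' [x'B opt].
  have := opt chi (chi_inB b pos); rewrite !costE /chi chi_cost ler_nat leqn0 => /eqP Hz.
  exact: l1_lb Hz.
Qed.
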